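(* Let $k\ge0$, $m\ge1$, and let $\varepsilon,\varepsilon'\in\{0,1\}^k$ be binary sequences differing only at position $r$ ($1\le r\le k$). Then $P(\varepsilon;b)-P(\varepsilon';b)$ can be written as a quotient $f(a,x)/g(a,x)$ of polynomials with $g$ not divisible by the linear form $M(\varepsilon;b;r)$ $(=M(\varepsilon';b;r))$.
   Context: Let $a=(a_1,\dots,a_k)$ and $x=(x_1,\dots,x_m)$ be indeterminates and $b=(b_1,\dots,b_{k+m}):=(a_1,\dots,a_k,x_1,\dots,x_m)$. For a binary sequence $\varepsilon=(\varepsilon_1,\dots,\varepsilon_k)$ put $\delta^\varepsilon=(\delta^\varepsilon_1,\dots,\delta^\varepsilon_{k+m}):=(1,\varepsilon_1,\dots,\varepsilon_k,0,\dots,0)$ (length $k+m$: a $1$ prepended and $m-1$ zeros appended). Let $L(\delta^\varepsilon,j):=\max\{i\le j:\delta^\varepsilon_i=1\}$, $M(\varepsilon;b;j):=\sum_{\ell=L(\delta^\varepsilon,j)}^{j}b_\ell$, and $P(\varepsilon;b):=\prod_{j=1}^{k+m}\frac1{M(\varepsilon;b;j)}$. *)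

(* Defs.v *)
From HB Require Import structures.
From mathcomp Require Import all_boot all_order all_algebra.
From mathcomp Require Import fraction.
From mathcomp Require Import mpoly.
Set Implicit Arguments. Unset Strict Implicit. Unset Printing Implicit Defensive.
Import GRing.Theory.
Local Open Scope ring_scope.

(* Polynomial ring Q[a_1..a_k, x_1..x_m] with n = k+m variables; the
   1-indexed variable b_l (1 <= l <= n) is 'X_(l-1). *)
Definition bvar (n l : nat) : {mpoly rat[n]} :=
  match (insub l.-1 : option 'I_n) with Some i => 'X_i | None => 0 end.

(* delta^eps (1-indexed, length k+m): delta_1 = 1, delta_{i} = eps_{i-1}
   for 2 <= i <= k+1, and 0 afterwards. eps is given as a list of length k,
   eps_i = nth false eps (i-1). *)
Definition delta (k : nat) (eps : seq bool) (i : nat) : bool :=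
  if i == 1%N then true
  else if (i <= k.+1)%N then nth false eps (i - 2) else false.

Definition Lidx (k : nat) (eps : seq bool) (j : nat) : nat :=
  \max_(1 <= i < j.+1 | delta k eps i) i.

Definition Mform (k m : nat) (eps : seq bool) (j : nat) : {mpoly rat[k + m]} :=
  \sum_(Lidx k eps j <= l < j.+1) bvar (k + m) l.

Definition Pfun (k m : nat) (eps : seq bool) : {fraction {mpoly rat[k + m]}} :=
  \prod_(1 <= j < (k + m).+1) (tofrac (Mform k m eps j))^-1.

Definition mdvd (n : nat) (p q : {mpoly rat[n]}) : Prop :=
  exists h : {mpoly rat[n]}, q = p * h.

(* Main.v *)
Require Import Defs.
From HB Require Import structures.
From mathcomp Require Import all_boot all_order all_algebra.
From mathcomp Require Import fraction.
From mathcomp Require Import mpoly.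
From mathcomp Require Import zify ring.
Import GRing.Theory.
Local Open Scope ring_scope.

Lemma prod_diff (R : comNzRingType) (I : Type) (s : seq I) (P : pred I)
  (x y : I -> R) (M : R) :
  (forall i, exists c, x i - y i = M * c) ->
  exists h, \prod_(i <- s | P i) x i - \prod_(i <- s | P i) y i = M * h.
Proof.
move=> Hxy; elim: s => [|a s [h Hh]].
  by exists 0; rewrite !big_nil subrr mulr0.
rewrite !big_cons; case: (P a) => //; last by exists h.
have [c Hc] := Hxy a.
set X := \prod_(j <- s | P j) x j in Hh *.
set Y := \prod_(j <- s | P j) y j in Hh *.
exists (c * X + y a * h).
have -> : x a = y a + M * c by rewrite -Hc addrC subrK.
have -> : Y = X - M * h by rewrite -Hh opprB addrC subrK.
ring.
Qed.

Lemma Lidx_ge1 k e j : (1 <= j)%N -> (1 <= Lidx k e j)%N.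
Proof.
move=> Hj; rewrite /Lidx big_ltn_cond // .
have -> : delta k e 1 = true by [].
by rewrite leq_maxl.
Qed.

Lemma Lidx_le k e j : (Lidx k e j <= j)%N.
Proof.
rewrite /Lidx big_nat_cond.
apply: (big_ind (fun x => x <= j)%N) => //.
  by move=> x y Hx Hy; rewrite geq_max Hx Hy.
by move=> i /andP[/andP[_ H] _].
Qed.

Section S.
Variables (k : nat) (e e' : seq bool) (r : nat).
Hypothesis Hr : (1 <= r <= k)%N.
Hypothesis Hne : nth false e r.-1 != nth false e' r.-1.
Hypothesis Heq : forall i : nat, i != r.-1 -> nth false e i = nth false e' i.

Lemma delta_eq i : (1 <= i)%N -> i != r.+1 -> delta k e i = delta k e' i.
Proof.
move=> H1 Hi; rewrite /delta; case: eqP => // Hi1; case: (i <= k.+1)%N => //.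
apply: Heq; apply/negP => /eqP H; move/negP: Hi; apply; apply/eqP; lia.
Qed.

Lemma delta_r : delta k e r.+1 = nth false e r.-1.
Proof.
rewrite /delta; have -> : (r.+1 == 1%N) = false by apply/negP => /eqP; lia.
have -> : (r.+1 <= k.+1)%N by lia.
by have -> : (r.+1 - 2 = r.-1)%N by lia.
Qed.

Lemma delta_r' : delta k e' r.+1 = nth false e' r.-1.
Proof.
rewrite /delta; have -> : (r.+1 == 1%N) = false by apply/negP => /eqP; lia.
have -> : (r.+1 <= k.+1)%N by lia.
by have -> : (r.+1 - 2 = r.-1)%N by lia.
Qed.

Lemma Lidx_low j : (j <= r)%N -> Lidx k e j = Lidx k e' j.
Proof.
move=> Hj; rewrite /Lidx; apply: congr_big_nat => // i /andP[H1 Hi].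
apply: delta_eq => //; apply/negP => /eqP; lia.
Qed.

Lemma Lidx_split ee j : (r.+1 <= j)%N -> Lidx k ee j = maxn (Lidx k ee r)
  (maxn (if delta k ee r.+1 then r.+1 else 0%N)
        (\max_(r.+2 <= i < j.+1 | delta k ee i) i)).
Proof.
move=> Hj; rewrite /Lidx (@big_cat_nat _ _ _ r.+1 1 j.+1) //; last by lia.
rewrite (@big_ltn_cond _ _ _ r.+1 j.+1); last by lia.
case: (delta k ee r.+1). exact: erefl. exact: (f_equal _ (esym (max0n _))).
Qed.

Lemma Lidx_cases j : (r.+1 <= j)%N ->
  Lidx k e j = Lidx k e' j \/
  (Lidx k e j = r.+1 /\ Lidx k e' j = Lidx k e r) \/
  (Lidx k e' j = r.+1 /\ Lidx k e j = Lidx k e r).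
Proof.
move=> Hj; rewrite (Lidx_split e j Hj) (Lidx_split e' j Hj) -(Lidx_low r (leqnn r)).
have -> : \max_(r.+2 <= i < j.+1 | delta k e' i) i =
          \max_(r.+2 <= i < j.+1 | delta k e i) i.
  apply: congr_big_nat => // i /andP[Hi _].
  symmetry; apply: delta_eq; first lia; apply/negP => /eqP; lia.
set T := \max_(r.+2 <= i < j.+1 | delta k e i) i.
have HT : (T == 0)%N || (r.+2 <= T)%N.
  rewrite /T big_nat_cond.
  apply: (big_ind (fun x => (x == 0)%N || (r.+2 <= x)%N)) => //.
    move=> x y /orP[/eqP->|Hx] /orP[/eqP->|Hy]; apply/orP; try lia.
  by move=> i /andP[/andP[H _] _]; apply/orP; right.
have HL := Lidx_le k e r.
move: Hne; rewrite -delta_r -delta_r'.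
case: (delta k e r.+1); case: (delta k e' r.+1) => // _;
  case/orP: HT => [/eqP HT|HT]; rewrite ?HT; lia.
Qed.

End S.

From mathcomp Require Import lra.
Import Order.TTheory Num.Theory.


Definition wfun (r Lr N : nat) (l : nat) : rat :=
  if (l < r)%N then 1 else if l == r then Lr%:R - r%:R else N%:R.

Lemma wfun_ge0 r Lr N l : l != r -> 0 <= wfun r Lr N l.
Proof. by move=> H; rewrite /wfun (negbTE H); case: ifP. Qed.

Lemma sum_ge0_range (F : nat -> rat) a b :
  (forall l, (a <= l < b)%N -> 0 <= F l) -> 0 <= \sum_(a <= l < b) F l.
Proof.
move=> H; rewrite big_nat_cond; apply: sumr_ge0 => l /andP[Hl _]; exact: H.
Qed.

Lemma wpos r Lr N L j : (1 <= Lr <= r)%N -> (r < N)%N -> (L <= j)%N -> j != r ->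
  0 < \sum_(L <= l < j.+1) wfun r Lr N l.
Proof.
move=> HL HN HLj Hjr; rewrite big_nat_recr //=.
case: (ltnP j r) => Hjr'.
  have -> : wfun r Lr N j = 1 by rewrite /wfun Hjr'.
  have : 0 <= \sum_(L <= i < j) wfun r Lr N i.
    apply: sum_ge0_range => l Hl; apply: wfun_ge0; apply/negP => /eqP; lia.
  lra.
have -> : wfun r Lr N j = N%:R.
  rewrite /wfun (negbTE Hjr); case: ifP => //; lia.
have HN' : (r%:R < N%:R :> rat) by rewrite ltr_nat.
have HL1 : (1 <= Lr%:R :> rat) by rewrite ler1n; lia.
case: (ltnP r L) => HrL.
  have : 0 <= \sum_(L <= i < j) wfun r Lr N i.
    apply: sum_ge0_range => l Hl; apply: wfun_ge0; apply/negP => /eqP; lia.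
  have : (0 <= r%:R :> rat) by [].
  lra.
have -> : \sum_(L <= i < j) wfun r Lr N i = \sum_(L <= i < r) wfun r Lr N i +
   (wfun r Lr N r + \sum_(r.+1 <= i < j) wfun r Lr N i).
  rewrite (@big_cat_nat _ _ _ r L j); [|lia|lia].
  rewrite (@big_ltn _ _ _ r j); last lia.
  by [].
have : 0 <= \sum_(L <= i < r) wfun r Lr N i.
  apply: sum_ge0_range => l Hl; apply: wfun_ge0; apply/negP => /eqP; lia.
have : 0 <= \sum_(r.+1 <= i < j) wfun r Lr N i.
  apply: sum_ge0_range => l Hl; apply: wfun_ge0; apply/negP => /eqP; lia.
have -> : wfun r Lr N r = Lr%:R - r%:R by rewrite /wfun ltnn eqxx.
have : (0 <= r%:R :> rat) by [].
lra.
Qed.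

Lemma wzero r Lr N : (Lr <= r)%N -> \sum_(Lr <= l < r.+1) wfun r Lr N l = 0.
Proof.
move=> H; rewrite big_nat_recr //=.
rewrite (@eq_big_nat _ _ _ Lr r _ (fun _ => 1)); last first.
  by move=> i /andP[_ Hi]; rewrite /wfun Hi.
rewrite sumr_const_nat /wfun ltnn eqxx natrB //; ring.
Qed.

Lemma ones_pos L j : (L <= j)%N -> 0 < \sum_(L <= l < j.+1) (1 : rat).
Proof. by move=> H; rewrite sumr_const_nat ltr0n; lia. Qed.

Lemma eval_sum n (w : nat -> rat) L j : (1 <= L)%N -> (j <= n)%N ->
  (\sum_(L <= l < j.+1) bvar n l).@[fun i : 'I_n => w i.+1] =
  \sum_(L <= l < j.+1) w l.
Proof.
move=> HL Hj; rewrite raddf_sum; apply: eq_big_nat => l /andP[H1 H2].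
rewrite /bvar; case: insubP => [i _ Hi|Hn].
  transitivity (w (val i).+1); first exact: mevalXU.
  rewrite Hi; congr w; lia.
exfalso; move/negP: Hn; apply; lia.
Qed.

Lemma alg (F : fieldType) (mr a a' h : F) : mr != 0 -> a != 0 -> a' != 0 ->
  a' - a = mr * h -> mr^-1 * a^-1 - mr^-1 * a'^-1 = h / (a * a').
Proof.
move=> Hm Ha Ha' H.
have -> : h = (a' - a) / mr by rewrite H mulrC mulrA mulVf // mul1r.
field.
by rewrite Hm Ha Ha'.
Qed.


Lemma Mform_diff k m e e' r j : (1 <= r <= k)%N ->
  nth false e r.-1 != nth false e' r.-1 ->
  (forall i : nat, i != r.-1 -> nth false e i = nth false e' i) ->
  exists c, Mform k m e' j - Mform k m e j = Mform k m e r * c.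
Proof.
move=> Hr Hne Heq.
case: (leqP j r) => Hj.
  exists 0; rewrite /Mform (Lidx_low k e e' r Hr Hne Heq j Hj). rewrite mulr0; exact: subrr.
have HLr := Lidx_le k e r.
case: (Lidx_cases k e e' r Hr Hne Heq j Hj) => [H|[[H1 H2]|[H1 H2]]].
- by exists 0; rewrite /Mform H mulr0; exact: subrr.
- have E : Mform k m e' j = Mform k m e r + Mform k m e j.
    rewrite /Mform H1 H2.
    by rewrite (@big_cat_nat _ _ _ r.+1 (Lidx k e r) j.+1); [|lia|lia].
  exists 1; rewrite E; ring.
- have E : Mform k m e j = Mform k m e r + Mform k m e' j.
    rewrite /Mform H1 H2.
    by rewrite (@big_cat_nat _ _ _ r.+1 (Lidx k e r) j.+1); [|lia|lia].
  exists (-1); rewrite E; ring.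
Qed.


Theorem mainTheorem7 (k m : nat) (eps eps' : seq bool) (r : nat) :
  (1 <= m)%N ->
  size eps = k -> size eps' = k ->
  (1 <= r <= k)%N ->
  nth false eps r.-1 != nth false eps' r.-1 ->
  (forall i : nat, i != r.-1 -> nth false eps i = nth false eps' i) ->
  exists f g : {mpoly rat[k + m]},
    ~ mdvd (Mform k m eps r) g /\
    Pfun k m eps - Pfun k m eps' = tofrac f / tofrac g.
Proof.
move=> Hm _ _ Hr Hne Heq.
set A := fun ee => \prod_(j <- index_iota 1 (k + m).+1 | j != r) Mform k m ee j.
have HMr : Mform k m eps' r = Mform k m eps r.
  by rewrite /Mform (Lidx_low k eps eps' r Hr Hne Heq r (leqnn r)).
have HP : forall ee, Pfun k m ee =
    (tofrac (Mform k m ee r))^-1 * (tofrac (A ee))^-1.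
  move=> ee; rewrite /Pfun (bigD1_seq r); last 2 first.
  - rewrite mem_index_iota; lia.
  - exact: iota_uniq.
  by rewrite prodfV rmorph_prod.
have [h Hh] := @prod_diff _ _ (index_iota 1 (k + m).+1) (fun j => j != r) _ _ _
  (fun j => Mform_diff k m eps eps' r j Hr Hne Heq).
set Lr := Lidx k eps r.
have HLr1 : (1 <= Lr)%N by apply: Lidx_ge1; lia.
have HLr : (Lr <= r)%N by apply: Lidx_le.
set w := wfun r Lr (k + m).+1.
set v := fun i : 'I_(k + m) => w i.+1.
have Hev : forall ee j, (1 <= j <= k + m)%N -> j != r -> 0 < (Mform k m ee j).@[v].
  move=> ee j /andP[Hj1 Hjn] Hjr.
  rewrite /Mform eval_sum //; last exact: Lidx_ge1.
  apply: wpos => //; [lia | lia | exact: Lidx_le].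
have HA : forall ee, 0 < (A ee).@[v].
  move=> ee; rewrite /A rmorph_prod big_seq_cond; apply: prodr_gt0 => j.
  rewrite mem_index_iota => /andP[Hj Hjr]; apply: Hev => //; lia.
have Hz : (Mform k m eps r).@[v] = 0.
  rewrite /Mform eval_sum //; last lia.
  exact: wzero.
have HMr0 : Mform k m eps r != 0.
  apply/eqP => H0.
  have E1 : (Mform k m eps r).@[fun i : 'I_(k + m) => (fun _ : nat => (1 : rat)) i.+1]
     = \sum_(Lr <= l < r.+1) (fun _ : nat => (1 : rat)) l.
    by rewrite /Mform (@eval_sum (k + m) (fun _ : nat => (1 : rat))) //; lia.
  rewrite H0 meval0 in E1.
  by move: (@ones_pos Lr r HLr); rewrite -E1 ltxx.
have HA0 : forall ee, A ee != 0.
  by move=> ee; apply/eqP => H0; move: (HA ee); rewrite H0 meval0 ltxx.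
have tofrac0 : forall p : {mpoly rat[k + m]}, p != 0 -> tofrac p != 0.
  by move=> p Hp; rewrite -(rmorph0 (@tofrac _)) tofrac_eq.
exists h, (A eps * A eps'); split.
  move=> [q Hq].
  have H0 : (A eps).@[v] * (A eps').@[v] = (Mform k m eps r).@[v] * q.@[v].
    by rewrite -!mevalM Hq.
  rewrite Hz mul0r in H0.
  by move: (mulr_gt0 (HA eps) (HA eps')); rewrite H0 ltxx.
rewrite !HP HMr rmorphM; apply: alg; try exact: tofrac0.
by rewrite -!rmorphB -rmorphM Hh.
Qed.
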